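(* Let $F$ be any field, $N\in\mathbb{N}$, and $p,p'\in\mathbb{N}$ with $p+p'\le N+1$. If $x\in F^{N+1}$ satisfies $\operatorname{rank}(H_{p,p'-1}(x))\le p$, then $\operatorname{rank}(H_{p,p'-1}(x))\le \operatorname{rank}(H_{p-1,p'}(x))$.
   Context: $\mathbb{N}=\{0,1,2,\ldots\}$. For $N\in\mathbb{N}$, $x=(x_0,\ldots,x_N)\in F^{N+1}$ and integers $s,t\ge -1$ with $s+t\le N$, the Hankel matrix $H_{s,t}(x)$ is the $(s+1)\times(t+1)$ matrix $(x_{i+j})_{0\le i\le s,\,0\le j\le t}$ (a matrix with zero rows or columns has rank $0$). *)

(* Defs.v *)
From mathcomp Require Import all_boot all_algebra.
Set Implicit Arguments. Unset Strict Implicit. Unset Printing Implicit Defensive.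
Import GRing.Theory.
Local Open Scope ring_scope.

(* In the paper's notation H_{s,t}(x) has s+1 rows and
   t+1 columns, so H_{s,t}(x) = hankel x (s+1) (t+1); s = -1 or t = -1 gives
   zero rows/columns.  Out-of-range indices (never used when s+t <= N) give 0. *)
Definition hankel (F : fieldType) (N : nat) (x : 'rV[F]_N.+1) (r c : nat)
  : 'M[F]_(r, c) :=
  \matrix_(i < r, j < c)
    (if (i + j < N.+1)%N then x 0 (inord (i + j)) else 0).

(* Main.v *)
Require Import Defs.
From mathcomp Require Import all_boot all_algebra.
From mathcomp Require Import zify.
Set Implicit Arguments. Unset Strict Implicit. Unset Printing Implicit Defensive.
Import GRing.Theory.
Local Open Scope ring_scope.

Lemma delta_l (F : fieldType) (n : nat) (f : 'I_n -> F) (k0 : 'I_n) (m : nat) :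
  m = k0 -> \sum_(k < n) ((m == k :> nat)%:R * f k) = f k0.
Proof.
move=> ->; rewrite (bigD1 k0) //= eqxx mul1r big1 ?addr0 // => k nk.
have -> : (k0 == k :> nat) = false by apply/negbTE; rewrite eq_sym.
by rewrite mul0r.
Qed.

Lemma delta_r (F : fieldType) (n : nat) (f : 'I_n -> F) (k0 : 'I_n) (m : nat) :
  m = k0 -> \sum_(k < n) (f k * (k == m :> nat)%:R) = f k0.
Proof.
move=> ->; rewrite (bigD1 k0) //= eqxx mulr1 big1 ?addr0 // => k nk.
have -> : (k == k0 :> nat) = false by apply/negbTE.
by rewrite mulr0.
Qed.

Theorem lemma6 (F : fieldType) (N p p' : nat) (x : 'rV[F]_N.+1) :
  (p + p' <= N.+1)%N ->
  (\rank (hankel x p.+1 p') <= p)%N ->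
  (\rank (hankel x p.+1 p') <= \rank (hankel x p p'.+1))%N.
Proof.
move=> _ hA.
set A := hankel x p.+1 p'; set B := hankel x p p'.+1.
pose L0 : 'M[F]_(p, p.+1) := \matrix_(i, j) ((i : nat) == j)%:R.
pose L1 : 'M[F]_(p, p.+1) := \matrix_(i, j) ((i.+1 : nat) == j)%:R.
pose S : 'M[F]_(p.+1) := \matrix_(k, l) ((k.+1 : nat) == l)%:R.
pose R0 : 'M[F]_(p.+1, p) := \matrix_(k, i) ((k : nat) == i)%:R.
pose P0 : 'M[F]_(p'.+1, p') := \matrix_(k, j) ((k : nat) == j)%:R.
pose P1 : 'M[F]_(p'.+1, p') := \matrix_(k, j) ((k : nat) == j.+1)%:R.
have hL0A : L0 *m A = B *m P0.
  apply/matrixP => i j; rewrite !mxE.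
  under eq_bigr do rewrite !mxE.
  rewrite (@delta_l _ _ _ (widen_ord (leqnSn p) i)) //.
  under [RHS]eq_bigr do rewrite !mxE.
  by rewrite (@delta_r _ _ _ (widen_ord (leqnSn p') j)) // /A /B /hankel ?mxE.
have hL1A : L1 *m A = B *m P1.
  apply/matrixP => i j; rewrite !mxE.
  under eq_bigr do rewrite !mxE.
  rewrite (@delta_l _ _ _ (lift ord0 i)) //.
  under [RHS]eq_bigr do rewrite !mxE.
  by rewrite (@delta_r _ _ _ (lift ord0 j)) // /A /B /hankel ?mxE !lift0 addSn addnS.
have hL0S : L0 *m S = L1.
  apply/matrixP => i j; rewrite !mxE.
  under eq_bigr do rewrite !mxE.
  by rewrite (@delta_l _ _ _ (widen_ord (leqnSn p) i)) // /A /B /hankel ?mxE.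
have hL0R0 : L0 *m R0 = 1%:M.
  apply/matrixP => i j; rewrite !mxE.
  under eq_bigr do rewrite !mxE.
  by rewrite (@delta_l _ _ _ (widen_ord (leqnSn p) i)) // /A /B /hankel ?mxE.
have hL0E : forall u : 'rV[F]_p, (u *m L0) 0 ord_max = 0.
  move=> u; rewrite !mxE big1 // => i _; rewrite !mxE /=.
  by rewrite ltn_eqF ?mulr0.
set K := kermx B.
have KB : K *m B = 0 by apply: mulmx_ker.
have s0 : (K *m L0 <= kermx A)%MS.
  by rewrite sub_kermx -mulmxA hL0A mulmxA KB mul0mx.
have s1 : (K *m L1 <= kermx A)%MS.
  by rewrite sub_kermx -mulmxA hL1A mulmxA KB mul0mx.
have rKA := mxrank_ker A.
have rKB : \rank K = (p - \rank B)%N by apply: mxrank_ker.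
have rBp : (\rank B <= p)%N by apply: rank_leq_row.
have [eBp|ltBp] := eqVneq (\rank B) p; first by rewrite eBp.
have rKL0 : \rank K = \rank (K *m L0).
  apply/eqP; rewrite eqn_leq mxrankM_maxl andbT.
  by rewrite -[X in (\rank X <= _)%N]mulmx1 -hL0R0 mulmxA mxrankM_maxl.
have hsum : (\rank K < \rank (K *m L0 + K *m L1)%MS)%N.
  rewrite rKL0 ltn_neqAle.
  have hl := mxrank_leqif_sup (addsmxSl (K *m L0) (K *m L1)).
  rewrite hl.1 andbT hl.2.
  apply/negP => sub.
  set V := K *m L0.
  have VS : forall v : 'rV[F]_p.+1, (v <= V)%MS -> (v *m S <= V)%MS.
    move=> v /submxP [D ->].
    have e : K *m L0 *m S = K *m L1 by rewrite -mulmxA hL0S.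
    rewrite /V -(mulmxA D) e.
    exact: submx_trans (submxMl D (K *m L1)) (submx_trans (addsmxSr _ _) sub).
  have key : forall k (v : 'rV[F]_p.+1), (v <= V)%MS ->
      forall j : 'I_p.+1, (j + k = p)%N -> v 0 j = 0.
    elim => [|k IH] v vV j hj.
      move/submxP: vV => [D ->]; rewrite /V mulmxA.
      have -> : j = ord_max by apply: val_inj => /=; lia.
      exact: hL0E.
    have hlt : (j.+1 < p.+1)%N by lia.
    have := IH _ (VS _ vV) (Ordinal hlt) ltac:(rewrite /=; lia).
    rewrite !mxE.
    under eq_bigr do rewrite !mxE.
    by rewrite (@delta_r _ _ _ j).
  have V0 : V = 0.
    apply/matrixP => i j; rewrite [RHS]mxE.
    have := key (p - j)%N (row i V) (row_sub _ _) j.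
    rewrite mxE; apply; have := ltn_ord j; lia.
  have : K = 0 by rewrite -[K]mulmx1 -hL0R0 mulmxA -/V V0 mul0mx.
  move/eqP; rewrite -mxrank_eq0 rKB; lia.
have : (K *m L0 + K *m L1 <= kermx A)%MS by rewrite addsmx_sub s0 s1.
move/mxrankS; rewrite rKA; move: hsum; rewrite rKB.
move: hA rBp ltBp; rewrite -/A.
move: (\rank A) (\rank B) (\rank (K *m L0 + K *m L1)%MS) => a b c.
move=> h1 h2 /eqP h3 h4 h5; lia.
Qed.
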